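(* Let $n$ and $k$ be even integers with $1\le k<n/2$. If $n\neq 4k$, then $C(n,k)=\langle\rho,\delta,\beta\rangle\cong \mathrm{D}_{2n}\times\mathbb{Z}_2$. If $n=4k$, then $C(n,k)=\langle\rho,\delta,\beta,\theta\rangle$.
   Context: $\mathrm{DGP}(n,k)$ ($1\le k<n/2$) is the graph with vertex set $\{(u_i,j),(v_i,j): 0\le i\le n-1,\ j\in\{0,1\}\}$ and edges $\{(u_i,j),(u_{i+1},1-j)\}$ (outer edges, forming the set $\mathcal{O}$), $\{(u_i,j),(v_i,1-j)\}$ (spokes, the set $\mathcal{S}$), $\{(v_i,j),(v_{i+k},1-j)\}$ (inner edges, the set $\mathcal{I}$), subscripts mod $n$; it is the canonical double cover of the generalized Petersen graph $\mathrm{GP}(n,k)$. Let $A(n,k)$ be its automorphism group and $C(n,k)$ the subgroup stabilizing each of $\mathcal{O},\mathcal{I},\mathcal{S}$ setwise. Define permutations of the vertex set: $(u_i,j)^\rho=(u_{i+1},j)$, $(v_i,j)^\rho=(v_{i+1},j)$; $(u_i,j)^\delta=(u_{-i},j)$, $(v_i,j)^\delta=(v_{-i},j)$; $(u_i,j)^\beta=(u_i,1-j)$, $(v_i,j)^\beta=(v_i,1-j)$. When $n=4k$ with $k$ even, define $\theta$ by: if $i+j$ is odd, $(u_i,j)^\theta=(u_{i+2k},j)$ and $(v_i,j)^\theta=(v_i,j)$; if $i+j$ is even, $(u_i,j)^\theta=(u_i,j)$ and $(v_i,j)^\theta=(v_{i+2k},j)$. $\mathrm{D}_{2n}$ is the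 dihedral group of order $2n$. *)

(* Defs.v *)
From mathcomp Require Import all_boot all_order all_fingroup all_algebra.
From mathcomp Require Import extremal.
Set Implicit Arguments. Unset Strict Implicit. Unset Printing Implicit Defensive.
Import GRing.Theory.
Local Open Scope ring_scope.

(* Vertices of DGP(n,k): inl (i,j) = (u_i, j), inr (i,j) = (v_i, j),
   with i in Z_n and j in {0,1} encoded as bool (false = 0, true = 1);
   1 - j is ~~ j.  The index type 'Z_n is only meaningful for n >= 2;
   the theorem assumes n > 2k >= 2. *)
Definition vert (n : nat) : finType := (('Z_n * bool) + ('Z_n * bool))%type.

Definition uu {n : nat} (i : 'Z_n) (j : bool) : vert n := inl (i, j).
Definition vv {n : nat} (i : 'Z_n) (j : bool) : vert n := inr (i, j).

Definition outerE (n : nat) : {set {set vert n}} :=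
  [set [set uu i j; uu (i + 1) (~~ j)] | i : 'Z_n, j : bool].
Definition spokeE (n : nat) : {set {set vert n}} :=
  [set [set uu i j; vv i (~~ j)] | i : 'Z_n, j : bool].
Definition innerE (n k : nat) : {set {set vert n}} :=
  [set [set vv i j; vv (i + k%:R) (~~ j)] | i : 'Z_n, j : bool].
Definition edgeE (n k : nat) : {set {set vert n}} :=
  outerE n :|: spokeE n :|: innerE n k.

Definition stab_edges (n : nat) (g : {perm vert n}) (F : {set {set vert n}}) : bool :=
  [set (fun x => g x) @: (e : {set vert n}) | e in F] == F.

Definition Aut_DGP (n k : nat) : {set {perm vert n}} :=
  [set g : {perm vert n} | stab_edges g (edgeE n k)].

Definition C_DGP (n k : nat) : {set {perm vert n}} :=
  [set g in Aut_DGP n k |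
     [&& stab_edges g (outerE n), stab_edges g (innerE n k)
       & stab_edges g (spokeE n)]].

(* permutation induced by a function (identity if not injective;
   all functions below are injective under the theorem's hypotheses) *)
Definition mkperm (T : finType) (f : T -> T) : {perm T} :=
  match injectiveP f with
  | ReflectT inj => perm inj
  | ReflectF _ => 1%g
  end.

Definition rho_fun (n : nat) (x : vert n) : vert n :=
  match x with inl (i, j) => uu (i + 1) j | inr (i, j) => vv (i + 1) j end.
Definition delta_fun (n : nat) (x : vert n) : vert n :=
  match x with inl (i, j) => uu (- i) j | inr (i, j) => vv (- i) j end.
Definition beta_fun (n : nat) (x : vert n) : vert n :=
  match x with inl (i, j) => uu i (~~ j) | inr (i, j) => vv i (~~ j) end.
(* theta (for n = 4k, k even): parity of i + j, i taken as its
   representative in {0,..,n-1} (well defined since n is even). *)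
Definition theta_fun (n k : nat) (x : vert n) : vert n :=
  match x with
  | inl (i, j) => if odd (val i + j) then uu (i + (2 * k)%:R) j else uu i j
  | inr (i, j) => if odd (val i + j) then vv i j else vv (i + (2 * k)%:R) j
  end.

Definition rho (n : nat) : {perm vert n} := mkperm (@rho_fun n).
Definition delta (n : nat) : {perm vert n} := mkperm (@delta_fun n).
Definition beta (n : nat) : {perm vert n} := mkperm (@beta_fun n).
Definition theta (n k : nat) : {perm vert n} := mkperm (@theta_fun n k).

(* Main.v *)
Require Import Defs.
From mathcomp Require Import all_boot all_order all_fingroup all_algebra.
From mathcomp Require Import extremal.
From mathcomp Require Import all_solvable.
From mathcomp Require Import ring zify.
Set Implicit Arguments. Unset Strict Implicit. Unset Printing Implicit Defensive.
Import GRing.Theory.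
Local Open Scope ring_scope.

Section Basics.
Variable m : nat.
Hypothesis m_even : ~~ odd m.
Local Notation N := m.+2.
Implicit Types (i a b : 'Z_N) (j : bool).

Lemma valD a b : nat_of_ord (a + b) = ((val a + val b) %% N)%N.
Proof. by []. Qed.

Lemma parD a b : odd (nat_of_ord (a + b)) = odd (nat_of_ord a) (+) odd (nat_of_ord b).
Proof. by rewrite valD odd_mod /= ?(negbTE m_even) // oddD. Qed.

Lemma parN a : odd (nat_of_ord (- a)) = odd (nat_of_ord a).
Proof.
rewrite /= odd_mod /= ?(negbTE m_even) // oddB; last by apply: ltnW; rewrite ltn_ord.
by rewrite /= (negbTE m_even).
Qed.

Lemma parn c : odd (nat_of_ord (c%:R : 'Z_N)) = odd c.
Proof. by rewrite val_Zp_nat // odd_mod /= ?(negbTE m_even). Qed.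

Lemma parB a b : odd (nat_of_ord (a - b)) = odd (nat_of_ord a) (+) odd (nat_of_ord b).
Proof. by rewrite parD parN. Qed.

Lemma par1 : odd (nat_of_ord (1 : 'Z_N)) = true.
Proof. by rewrite -(parn 1). Qed.

Lemma natr_eq c d : (c < N)%N -> (d < N)%N -> (c%:R : 'Z_N) = d%:R -> c = d.
Proof.
move=> cN dN /(congr1 (@nat_of_ord _)); rewrite !val_Zp_nat // !modn_small //.
Qed.

End Basics.

Lemma set2_eq (T : finType) (x y a b : T) :
  [set x; y] = [set a; b] -> (x = a /\ y = b) \/ (x = b /\ y = a).
Proof.
move=> E.
have xab : x \in [set a; b] by rewrite -E set21.
have yab : y \in [set a; b] by rewrite -E set22.
have axy : a \in [set x; y] by rewrite E set21.
have bxy : b \in [set x; y] by rewrite E set22.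
move: xab yab axy bxy; rewrite !inE.
case/orP=> /eqP xe; case/orP=> /eqP ye; subst x y.
- move=> _ /orP[]/eqP E2; subst; by [left|right].
- by left.
- by right.
- move=> /orP[]/eqP E2 _; subst; by left.
Qed.

Lemma set2S (T : finType) (x y : T) : [set x; y] = [set y; x].
Proof. by apply/setP=> z; rewrite !inE orbC. Qed.

Lemma imset_pair (T : finType) (g : {perm T}) (x y : T) :
  [set g z | z in [set x; y]] = [set g x; g y].
Proof. by rewrite imsetU1 imset_set1. Qed.

Section Adj.
Variables (m k : nat).
Local Notation N := m.+2.
Implicit Types (i a b : 'Z_N) (j : bool).

Definition partner (x : vert N) : vert N :=
  match x with inl (i, j) => vv i (~~ j) | inr (i, j) => uu i (~~ j) end.

Lemma outer_uu i j y : [set uu i j; y] \in outerE N ->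
  y = uu (i + 1) (~~ j) \/ y = uu (i - 1) (~~ j).
Proof.
case/imset2P=> i' j' _ _ /set2_eq [[[-> ->] ->]|[[-> ->] ->]]; first by left.
by right; rewrite addrK negbK.
Qed.

Lemma outer_u x y : [set x; y] \in outerE N -> exists i j, x = uu i j.
Proof.
by case/imset2P=> i' j' _ _ /set2_eq [[-> _]|[-> _]]; do 2 eexists.
Qed.

Lemma spoke_partner x y : [set x; y] \in spokeE N -> y = partner x.
Proof.
by case/imset2P=> i' j' _ _ /set2_eq [[-> ->]|[-> ->]] //=; rewrite negbK.
Qed.

Lemma inner_vv i j y : [set vv i j; y] \in innerE N k ->
  y = vv (i + k%:R) (~~ j) \/ y = vv (i - k%:R) (~~ j).
Proof.
case/imset2P=> i' j' _ _ /set2_eq [[[-> ->] ->]|[[-> ->] ->]]; first by left.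
by right; rewrite addrK negbK.
Qed.

Lemma inO a b j j' : b = a + 1 -> j' = ~~ j ->
  [set uu a j; uu b j'] \in outerE N /\ [set uu b j'; uu a j] \in outerE N.
Proof.
move=> -> ->; split; apply/imset2P; exists a j => //.
by rewrite set2S.
Qed.

Lemma inS a b j j' : b = a -> j' = ~~ j ->
  [set uu a j; vv b j'] \in spokeE N /\ [set vv b j'; uu a j] \in spokeE N.
Proof.
move=> -> ->; split; apply/imset2P; exists a j => //.
by rewrite set2S.
Qed.

Lemma inI a b j j' : b = a + k%:R -> j' = ~~ j ->
  [set vv a j; vv b j'] \in innerE N k /\ [set vv b j'; vv a j] \in innerE N k.
Proof.
move=> -> ->; split; apply/imset2P; exists a j => //.
by rewrite set2S.
Qed.

End Adj.

Lemma mkpermE (T : finType) (f : T -> T) : injective f -> forall x, mkperm f x = f x.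
Proof. by move=> inj x; rewrite /mkperm; case: injectiveP => // ?; rewrite permE. Qed.

Section CGroup.
Variables (n k : nat).
Implicit Types (g h : {perm vert n}) (F : {set {set vert n}}).

Lemma stab_edgesP g F : (forall e, e \in F -> [set g x | x in e] \in F) -> stab_edges g F.
Proof.
move=> H; rewrite /stab_edges eqEcard; apply/andP; split.
  by apply/subsetP=> _ /imsetP[e eF ->]; apply: H.
rewrite card_imset //; apply: imset_inj; exact: perm_inj.
Qed.

Lemma stab_edge g F x y : stab_edges g F -> [set x; y] \in F -> [set g x; g y] \in F.
Proof.
move=> /eqP E xyF; rewrite -E -imset_pair; exact: imset_f.
Qed.

Lemma stab_all g F : stab_edges g F -> forall e, e \in F -> [set g x | x in e] \in F.
Proof. by move=> /eqP E e eF; rewrite -E; apply: imset_f. Qed.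

Lemma Cprops g : g \in C_DGP n k ->
  [/\ stab_edges g (outerE n), stab_edges g (innerE n k) & stab_edges g (spokeE n)].
Proof. by rewrite inE => /andP[_ /and3P[]]. Qed.

Lemma inC_stab g : stab_edges g (outerE n) -> stab_edges g (innerE n k) ->
  stab_edges g (spokeE n) -> g \in C_DGP n k.
Proof.
move=> sO sI sS; rewrite inE sO sI sS !andbT inE.
apply: stab_edgesP => e; rewrite /edgeE !inE => /orP[/orP[]|] eF.
- by rewrite (stab_all sO).
- by rewrite (stab_all sS) ?orbT.
- by rewrite (stab_all sI) ?orbT.
Qed.

Lemma C_group_set : group_set (C_DGP n k).
Proof.
apply/group_setP; split.
  apply: inC_stab; apply: stab_edgesP => e eF;
  by rewrite (eq_imset _ (fun x => perm1 x)) imset_id.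
move=> g h /Cprops[gO gI gS] /Cprops[hO hI hS].
have M F : stab_edges g F -> stab_edges h F -> stab_edges (g * h)%g F.
  move=> sg sh; apply: stab_edgesP => e eF.
  rewrite (eq_imset _ (fun x => permM g h x)) imset_comp.
  by apply: (stab_all sh); apply: (stab_all sg).
by apply: inC_stab; apply: M.
Qed.

Canonical C_group := Group C_group_set.

End CGroup.

Section Gens.
Variables (m k : nat).
Hypothesis m_even : ~~ odd m.
Hypothesis k_even : ~~ odd k.
Local Notation N := m.+2.
Implicit Types (i a b : 'Z_N) (j : bool).

Lemma inC_gen (g : {perm vert N}) :
  (forall i j, [set g (uu i j); g (uu (i + 1) (~~ j))] \in outerE N) ->
  (forall i j, [set g (uu i j); g (vv i (~~ j))] \in spokeE N) ->
  (forall i j, [set g (vv i j); g (vv (i + k%:R) (~~ j))] \in innerE N k) ->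
  g \in C_DGP N k.
Proof.
move=> HO HS HI; apply: inC_stab; apply: stab_edgesP => e /imset2P[i j _ _ ->];
by rewrite imset_pair.
Qed.

Lemma rho_inj : injective (@rho_fun N).
Proof.
apply: (can_inj (g := fun x : vert N => match x with inl (i, j) => uu (i - 1) j
  | inr (i, j) => vv (i - 1) j end)) => [[[i j]|[i j]]]; by rewrite /= addrK.
Qed.
Lemma delta_inj : injective (@delta_fun N).
Proof.
apply: (can_inj (g := @delta_fun N)) => [[[i j]|[i j]]]; by rewrite /= opprK.
Qed.
Lemma beta_inj : injective (@beta_fun N).
Proof.
apply: (can_inj (g := @beta_fun N)) => [[[i j]|[i j]]]; by rewrite /= negbK.
Qed.

Lemma rhoE x : rho N x = rho_fun x. Proof. exact: mkpermE rho_inj x. Qed.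
Lemma deltaE x : delta N x = delta_fun x. Proof. exact: mkpermE delta_inj x. Qed.
Lemma betaE x : beta N x = beta_fun x. Proof. exact: mkpermE beta_inj x. Qed.

Lemma rho_C : rho N \in C_DGP N k.
Proof.
apply: inC_gen => i j; rewrite !rhoE /=.
- by apply: (proj1 (inO _ _)).
- by apply: (proj1 (inS _ _)).
- by apply: (proj1 (inI _ _)) => //; rewrite addrAC.
Qed.

Lemma delta_C : delta N \in C_DGP N k.
Proof.
apply: inC_gen => i j; rewrite !deltaE /=.
- apply: (proj2 (inO _ _)); last by rewrite negbK.
  by rewrite opprD addrNK.
- by apply: (proj1 (inS _ _)).
- apply: (proj2 (inI _ _)); last by rewrite negbK.
  by rewrite opprD addrNK.
Qed.

Lemma beta_C : beta N \in C_DGP N k.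
Proof.
apply: inC_gen => i j; rewrite !betaE /=.
- by apply: (proj1 (inO _ _)).
- by apply: (proj1 (inS _ _)).
- by apply: (proj1 (inI _ _)).
Qed.

Hypothesis n4k : N = (4 * k)%N.

Lemma four_k : (4 * k)%:R = 0 :> 'Z_N.
Proof. by apply/eqP; rewrite -val_eqE /= val_Zp_nat // -n4k modnn. Qed.

Lemma thetaU i j : @theta_fun N k (uu i j) =
  if odd i (+) j then uu (i + (2 * k)%:R) j else uu i j.
Proof. by rewrite /= oddD oddb. Qed.
Lemma thetaV i j : @theta_fun N k (vv i j) =
  if odd i (+) j then vv i j else vv (i + (2 * k)%:R) j.
Proof. by rewrite /= oddD oddb. Qed.

Lemma twice2k i : i + (2 * k)%:R + (2 * k)%:R = i.
Proof.
have E : (4 * k)%:R = (2 * k)%:R + (2 * k)%:R :> 'Z_N.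
  by rewrite -natrD -mulnDl.
by rewrite -addrA -E four_k addr0.
Qed.

Lemma par2k i : odd (nat_of_ord (i + (2 * k)%:R : 'Z_N)) = odd i.
Proof. by rewrite parD // parn // oddM /= addbF. Qed.

Lemma theta_invol x : @theta_fun N k (@theta_fun N k x) = x.
Proof.
case: x => [[i j]|[i j]].
  rewrite !thetaU; case: ifP => h; rewrite thetaU ?par2k h ?twice2k //.
rewrite !thetaV; case: ifP => h; rewrite thetaV ?par2k h ?twice2k //.
Qed.

Lemma theta_inj : injective (@theta_fun N k).
Proof. exact: can_inj theta_invol. Qed.

Lemma thetaE x : theta N k x = @theta_fun N k x. Proof. exact: mkpermE theta_inj x. Qed.

Lemma parkk i : odd (nat_of_ord (i + k%:R : 'Z_N)) = odd i.
Proof. by rewrite parD // parn // (negbTE k_even) addbF. Qed.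

Lemma theta_C : theta N k \in C_DGP N k.
Proof.
apply: inC_gen => i j; rewrite !thetaE.
  rewrite !thetaU parD // par1 // addbT addbN addNb negbK.
  case: ifP => _.
    by apply: (proj1 (inO _ _)) => //; rewrite addrAC.
  by apply: (proj1 (inO _ _)).
- rewrite thetaU thetaV addbN; case: ifP => _ /=.
    by apply: (proj1 (inS _ _)).
  by apply: (proj1 (inS _ _)).
- rewrite thetaV thetaV parkk addbN; case: ifP => _ /=.
    apply: (proj2 (inI _ _)); last by rewrite negbK.
    by rewrite -{1}(twice2k i) !natrM; ring.
  apply: (proj2 (inI _ _)); last by rewrite negbK.
  by rewrite !natrM; ring.
Qed.

End Gens.

Definition vidx n (x : vert n) : 'Z_n := match x with inl p => p.1 | inr p => p.1 end.
Lemma vidx_vv n a b : @vidx n (vv a b) = a. Proof. by []. Qed.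
Lemma vidx_uu n a b : @vidx n (uu a b) = a. Proof. by []. Qed.

Section Rigid.
Variables (m k : nat).
Hypothesis m_even : ~~ odd m.
Hypothesis k_even : ~~ odd k.
Hypothesis k_ge1 : (1 <= k)%N.
Hypothesis k_lt : (2 * k < m.+2)%N.
Local Notation N := m.+2.
Implicit Types (i a b : 'Z_N) (j : bool) (h g : {perm vert N}).

Lemma k_ge2 : (2 <= k)%N.
Proof. by case: k k_ge1 k_even => [|[|]]. Qed.

Lemma Zshift (x : 'Z_N) c d : (c < N)%N -> (d < N)%N -> x + c%:R = x + d%:R -> c = d.
Proof. by move=> cN dN /addrI; apply: natr_eq. Qed.

Lemma CO h x y : h \in C_DGP N k -> [set x; y] \in outerE N -> [set h x; h y] \in outerE N.
Proof. by case/Cprops=> sO _ _; apply: stab_edge. Qed.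
Lemma CS h x y : h \in C_DGP N k -> [set x; y] \in spokeE N -> [set h x; h y] \in spokeE N.
Proof. by case/Cprops=> _ _ sS; apply: stab_edge. Qed.
Lemma CI h x y : h \in C_DGP N k -> [set x; y] \in innerE N k -> [set h x; h y] \in innerE N k.
Proof. by case/Cprops=> _ sI _; apply: stab_edge. Qed.

Lemma partnerK : involutive (@partner m).
Proof. by move=> [[i j]|[i j]]; rewrite /= negbK. Qed.

Lemma g_partner h i j : h \in C_DGP N k -> h (vv i j) = partner (h (uu i (~~ j))).
Proof.
move=> hC; apply: spoke_partner; apply: CS => //.
by apply: (proj1 (inS _ _)); rewrite ?negbK.
Qed.

Lemma g_partner' h i j : h \in C_DGP N k -> h (uu i j) = partner (h (vv i (~~ j))).
Proof. by move=> hC; rewrite g_partner // negbK partnerK. Qed.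

Lemma agreeC g h : g \in C_DGP N k -> h \in C_DGP N k ->
  (forall i j, g (uu i j) = h (uu i j)) -> g = h.
Proof.
move=> gC hC E; apply/permP => [[[i j]|[i j]]]; first exact: E.
by rewrite -[inr _]/(vv i j) !g_partner // E.
Qed.

Lemma fix_a h : h \in C_DGP N k -> h (uu 0 false) = uu 0 false ->
  h (uu 1 true) = uu 1 true -> forall i, h (uu i (odd i)) = uu i (odd i).
Proof.
move=> hC h0 h1.
pose a c := uu (c%:R : 'Z_N) (odd c).
suff H c : h (a c) = a c /\ h (a c.+1) = a c.+1.
  by move=> i; case: (H (nat_of_ord i)); rewrite /a natr_Zp.
elim: c => [|c [IH1 IH2]]; first by rewrite /a mulr0n mulr1n.
split=> //.
have e : [set a c.+1; a c.+2] \in outerE N.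
  by apply: (proj1 (inO _ _)) => //; rewrite -natr1.
move: (CO hC e); rewrite IH2 => /outer_uu [] E; first by rewrite E /a natr1.
have : h (a c.+2) = h (a c).
  by rewrite IH1 E /a -natr1 addrK /= negbK.
rewrite /a => /perm_inj [] E'.
have : (c%:R : 'Z_N) + 2%:R = c%:R + 0%:R.
 rewrite addr0 -[in RHS]E' -!natr1; ring.
by move/Zshift; have := k_ge2; lia.
Qed.

Lemma parkN i : odd (nat_of_ord (i - k%:R : 'Z_N)) = odd i.
Proof. by rewrite parB // parn // (negbTE k_even) addbF. Qed.

Lemma four_k_eq : (4 * k)%:R = 0 :> 'Z_N -> N = (4 * k)%N.
Proof.
move=> /(congr1 (@nat_of_ord _)); rewrite val_Zp_nat // => E.
have := divn_eq (4 * k) N; rewrite E addn0.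
move: (4 * k %/ N)%N => q; move: k_lt k_ge1; case: q => [|[|q]] *; nia.
Qed.

Lemma b_step h : h \in C_DGP N k -> (forall i, h (uu i (odd i)) = uu i (odd i)) ->
  forall i, h (uu i (~~ odd i)) = uu i (~~ odd i) \/
    (h (uu i (~~ odd i)) = uu (i + (2 * k)%:R) (~~ odd i) /\ N = (4 * k)%N).
Proof.
move=> hC H i; set j := ~~ odd i.
have y1 : h (vv (i + k%:R) j) = vv (i + k%:R) j.
  by rewrite g_partner // /j negbK -(parkk m_even k_even) H (parkk m_even k_even).
have y2 : h (vv (i - k%:R) j) = vv (i - k%:R) j.
  by rewrite g_partner // /j negbK -parkN H parkN.
have e1 : [set vv i (~~ j); vv (i + k%:R) j] \in innerE N k.
  by apply: (proj1 (inI _ _)); rewrite ?negbK.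
have e2 : [set vv (i - k%:R) j; vv i (~~ j)] \in innerE N k.
  by apply: (proj1 (inI _ _)); rewrite ?subrK.
move: (CI hC e1) (CI hC e2); rewrite y1 y2 set2S.
move=> /inner_vv [] E1 /inner_vv [] E2.
- left; move: E2; rewrite subrK => E2.
  by rewrite g_partner' // E2 /= negbK.
- right; have N4 : N = (4 * k)%N.
    apply: four_k_eq; move: E1; rewrite E2 => /(congr1 (@vidx _)); rewrite !vidx_vv => E.
    apply: (@addrI _ i).
    have -> : i + (4 * k)%:R = (i + k%:R + k%:R) + k%:R + k%:R by rewrite natrM; ring.
    rewrite -E; ring.
  split=> //.
  rewrite g_partner' // E1 /= negbK.
  by rewrite mul2n -addnn natrD addrA.
- left; move: E1; rewrite addrK => E1.
  by rewrite g_partner' // E1 /= negbK.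
- left; move: E1; rewrite addrK => E1.
  by rewrite g_partner' // E1 /= negbK.
Qed.

Lemma no2k x j : @uu N (x + (2 * k)%:R) j = uu x j -> False.
Proof.
move/(congr1 (@vidx _)); rewrite !vidx_uu => E.
have : x + (2 * k)%:R = x + 0%:R by rewrite addr0.
by move/Zshift; move: k_lt k_ge1; lia.
Qed.

Lemma rigid h : h \in C_DGP N k -> h (uu 0 false) = uu 0 false ->
  h (uu 1 true) = uu 1 true -> h = 1%g \/ (N = (4 * k)%N /\ h = theta N k).
Proof.
move=> hC h0 h1.
have Ha := fix_a hC h0 h1.
have Hb := b_step hC Ha.
have split_j i j : j = odd i \/ j = ~~ odd i by case: j; case: (odd i); auto.
have one_C : (1%g : {perm vert N}) \in C_DGP N k by apply: group1.
case: (eqVneq N (4 * k)%N) => [N4|N4]; last first.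
  left; apply: agreeC => // i j; rewrite perm1.
  case: (split_j i j) => ->; first exact: Ha.
  by case: (Hb i) => // -[_ /eqP]; rewrite (negbTE N4).
pose s i := h (uu i (~~ odd i)) == uu i (~~ odd i).
have step i : s (i + 1) = s i.
  have e : [set uu i (~~ odd i); uu (i + 1) (~~ odd (nat_of_ord (i + 1)))] \in outerE N.
    by apply: (proj1 (inO _ _)) => //; rewrite parD // par1 // addbT.
  move: (CO hC e); rewrite /s.
  case: (Hb i) => [fi|[si _]]; case: (Hb (i + 1)) => [fi1|[si1 _]].
  - by rewrite fi fi1 !eqxx.
  - rewrite fi si1 => /outer_uu [] /(congr1 (@vidx _)); rewrite !vidx_uu => E; exfalso.
      by apply: (@no2k (i + 1) true); rewrite E.
    have : (i - 1) + ((2 * k).+2)%:R = (i - 1) + 0%:R.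
      by rewrite addr0 -[in RHS]E -[(2 * k).+2]addn2 natrD; ring.
    by move/Zshift; move: k_lt k_ge2 N4; lia.
  - rewrite si fi1 => /outer_uu [] /(congr1 (@vidx _)); rewrite !vidx_uu => E; exfalso.
      by apply: (@no2k (i + 1) true); rewrite [in RHS]E [in RHS]addrAC.
    have : (i - 1) + (2 * k)%:R = (i - 1) + 2%:R.
      by rewrite addrAC -E; ring.
    by move/Zshift; move: k_lt k_ge2 N4 k_even; case: k => [|[|k']] //= *; lia.
  - rewrite si si1; case: eqP => [/no2k //|_]; case: eqP => [/no2k //|_] //.
have all c : s (c%:R) = s 0.
  by elim: c => [|c IH]; rewrite ?mulr0n // -natr1 step.
have alli i : s i = s 0 by have := all (nat_of_ord i); rewrite natr_Zp.
case s0 : (s 0).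
  left; apply: agreeC => // i j; rewrite perm1.
  case: (split_j i j) => ->; first exact: Ha.
  by apply/eqP; rewrite -/(s i) alli.
right; split=> //; apply: agreeC => //; first exact: theta_C.
move=> i j; rewrite thetaE // thetaU //.
case: (split_j i j) => ->; first by rewrite addbb Ha.
rewrite addbN addbb /=.
by case: (Hb i) => [/eqP|[]//]; rewrite -/(s i) alli s0.
Qed.

End Rigid.

Section Final.
Variables (m k : nat).
Hypothesis m_even : ~~ odd m.
Hypothesis k_even : ~~ odd k.
Hypothesis k_ge1 : (1 <= k)%N.
Hypothesis k_lt : (2 * k < m.+2)%N.
Local Notation N := m.+2.
Implicit Types (i a b : 'Z_N) (j : bool) (h g : {perm vert N}).

Local Notation S3 := [set rho N; delta N; beta N].

Lemma rhoXu c i j : ((rho N ^+ c)%g (uu i j)) = uu (i + c%:R) j.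
Proof.
elim: c => [|c IH]; first by rewrite expg0 perm1 mulr0n addr0.
by rewrite expgSr permM IH rhoE /= -natr1 addrA.
Qed.

Lemma rhoXv c i j : ((rho N ^+ c)%g (vv i j)) = vv (i + c%:R) j.
Proof.
elim: c => [|c IH]; first by rewrite expg0 perm1 mulr0n addr0.
by rewrite expgSr permM IH rhoE /= -natr1 addrA.
Qed.

Lemma S3_C : <<S3>>%g \subset C_DGP N k.
Proof.
rewrite gen_subG; apply/subsetP => x /setUP [/setU1P [->|/set1P ->]|/set1P ->].
- exact: rho_C.
- exact: delta_C.
- exact: beta_C.
Qed.

Lemma normalize g : g \in C_DGP N k -> exists2 p, p \in <<S3>>%g &
  [/\ (g * p)%g \in C_DGP N k, (g * p)%g (uu 0 false) = uu 0 false
    & (g * p)%g (uu 1 true) = uu 1 true].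
Proof.
move=> gC.
have rS : rho N \in <<S3>>%g by apply: mem_gen; rewrite !inE eqxx.
have dS : delta N \in <<S3>>%g by apply: mem_gen; rewrite !inE eqxx orbT.
have bS : beta N \in <<S3>>%g by apply: mem_gen; rewrite !inE eqxx orbT.
have e01 : [set @uu N 0 false; uu 1 true] \in outerE N.
  by apply: (proj1 (inO _ _)); rewrite ?add0r.
have [i [j gi]] := outer_u (CO gC e01).
pose p1 := ((rho N ^+ (nat_of_ord i))^-1 * (if j then beta N else 1))%g.
have p1S : p1 \in <<S3>>%g.
  by rewrite /p1 groupM ?groupV ?groupX //; case: (j) => //; rewrite group1.
have g1C : (g * p1)%g \in C_DGP N k by rewrite groupM // (subsetP S3_C).
have g10 : (g * p1)%g (uu 0 false) = uu 0 false.
  rewrite permM gi /p1 permM.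
  have -> : uu i j = (rho N ^+ (nat_of_ord i))%g (uu 0 j) by rewrite rhoXu add0r natr_Zp.
  by rewrite permK; case: (j) => //; rewrite ?betaE ?perm1.
move: (CO g1C e01); rewrite g10 => /outer_uu [] g11.
  by exists p1 => //; split=> //; rewrite g11 add0r.
exists (p1 * delta N)%g; first by rewrite groupM.
rewrite mulgA; split.
- by rewrite groupM // (subsetP S3_C).
- by rewrite permM g10 deltaE /= oppr0.
- by rewrite permM g11 deltaE /= sub0r opprK.
Qed.

Local Notation S4 := [set rho N; delta N; beta N; theta N k].

Lemma C_eq3 : N != (4 * k)%N -> C_DGP N k = <<S3>>%g.
Proof.
move=> N4; apply/eqP; rewrite eqEsubset S3_C andbT; apply/subsetP => g gC.
have [p pS [hC h0 h1]] := normalize gC.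
case: (rigid m_even k_even k_ge1 k_lt hC h0 h1) => [E|[E _]]; last by rewrite E eqxx in N4.
by rewrite -(mulgK p g) E mul1g groupV.
Qed.

Lemma C_eq4 : N = (4 * k)%N -> C_DGP N k = <<S4>>%g.
Proof.
move=> N4; apply/eqP; rewrite eqEsubset; apply/andP; split; last first.
  rewrite gen_subG; apply/subsetP => x /setUP [/setUP [/setU1P [->|/set1P ->]|/set1P ->]|/set1P ->].
  - exact: rho_C.
  - exact: delta_C.
  - exact: beta_C.
  - exact: theta_C.
apply/subsetP => g gC.
have [p pS [hC h0 h1]] := normalize gC.
have S34 : <<S3>>%g \subset <<S4>>%g.
  by apply: genS; apply/subsetP => x xS; rewrite inE xS.
have pS4 := subsetP S34 _ pS.
rewrite -(mulgK p g).
case: (rigid m_even k_even k_ge1 k_lt hC h0 h1) => [->|[_ ->]].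
  by rewrite mul1g groupV.
by rewrite groupM ?groupV // mem_gen // inE set11 orbT.
Qed.

End Final.

Definition vb n (x : vert n) : bool := match x with inl p => p.2 | inr p => p.2 end.

Section Iso.
Variables (m k : nat).
Hypothesis m_even : ~~ odd m.
Hypothesis k_even : ~~ odd k.
Hypothesis k_ge1 : (1 <= k)%N.
Hypothesis k_lt : (2 * k < m.+2)%N.
Local Notation N := m.+2.
Implicit Types (i a b : 'Z_N) (j : bool) (h g : {perm vert N}).
Local Notation rh := (rho N).
Local Notation de := (delta N).
Local Notation be := (beta N).

Lemma N_gt2 : (2 < N)%N.
Proof. by move: k_lt k_ge1; lia. Qed.

Lemma two_neq0 : (2%:R : 'Z_N) != 0.
Proof.
apply/eqP => /(congr1 (@nat_of_ord _)); rewrite val_Zp_nat // modn_small //.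
exact: N_gt2.
Qed.

Lemma one_neqN1 : (1 : 'Z_N) != -1.
Proof.
apply/eqP => E; move/eqP: two_neq0; apply.
by rewrite mulr2n {2}E subrr.
Qed.

Lemma order2 (gT : finGroupType) (x : gT) : x != 1%g -> (x ^+ 2 = 1)%g -> #[x]%g = 2%N.
Proof.
move=> x1 x2; apply/eqP; rewrite eqn_leq dvdn_leq //= ?order_gt1 //.
by rewrite order_dvdn x2.
Qed.

Lemma de2 : (de * de = 1)%g.
Proof.
by apply/permP => [[[i j]|[i j]]]; rewrite permM perm1 !deltaE /= opprK.
Qed.

Lemma be2 : (be * be = 1)%g.
Proof.
by apply/permP => [[[i j]|[i j]]]; rewrite permM perm1 !betaE /= negbK.
Qed.

Lemma rd2 : (rh * de * (rh * de) = 1)%g.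
Proof.
apply/permP => [[[i j]|[i j]]]; rewrite !permM perm1 !deltaE !rhoE /=;
  congr (_ _ _); ring.
Qed.

Lemma de_neq1 : de != 1%g.
Proof.
apply/eqP => /permP /(_ (uu 1 false)); rewrite perm1 deltaE /=.
move=> /(congr1 (@vidx _)); rewrite !vidx_uu => E.
by move/eqP: one_neqN1; rewrite E.
Qed.

Lemma rh_neq1 : rh != 1%g.
Proof.
apply/eqP => /permP /(_ (uu 0 false)); rewrite perm1 rhoE /= add0r.
move=> /(congr1 (@vidx _)); rewrite !vidx_uu => /eqP.
by rewrite oner_eq0.
Qed.

Lemma be_neq1 : be != 1%g.
Proof. by apply/eqP => /permP /(_ (uu 0 false)); rewrite perm1 betaE. Qed.

Lemma rd_neq1 : (rh * de)%g != 1%g.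
Proof.
apply/eqP => /permP /(_ (uu 0 false)); rewrite perm1 permM rhoE deltaE /= add0r.
move=> /(congr1 (@vidx _)); rewrite !vidx_uu => /eqP.
by rewrite oppr_eq0 oner_eq0.
Qed.

Lemma ord_de : #[de]%g = 2%N.
Proof. by apply: order2; rewrite ?de_neq1 // expgS expg1 de2. Qed.
Lemma ord_be : #[be]%g = 2%N.
Proof. by apply: order2; rewrite ?be_neq1 // expgS expg1 be2. Qed.
Lemma ord_rd : #[rh * de]%g = 2%N.
Proof. by apply: order2; rewrite ?rd_neq1 // expgS expg1 rd2. Qed.

Lemma de_neq_rd : de != (rh * de)%g.
Proof.
apply: contra rh_neq1 => /eqP E; apply/eqP.
by apply: (mulIg de); rewrite mul1g -E.
Qed.

Lemma rhoX0 c : (c%:R : 'Z_N) = 0 -> (rh ^+ c = 1)%g.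
Proof.
move=> c0; apply/permP => [[[i j]|[i j]]]; rewrite perm1.
  by move: (rhoXu c i j); rewrite c0 addr0.
by move: (rhoXv c i j); rewrite c0 addr0.
Qed.

Lemma ord_rh : #[rh]%g = N.
Proof.
apply/eqP; rewrite eqn_dvd; apply/andP; split.
  rewrite order_dvdn; apply/eqP/rhoX0.
  by apply: ord_inj; rewrite val_Zp_nat // modnn.
have := expg_order rh; move/permP/(_ (uu 0 false)); rewrite rhoXu perm1 add0r.
move=> /(congr1 (@vidx _)); rewrite !vidx_uu.
move=> /(congr1 (@nat_of_ord _)); rewrite val_Zp_nat // => E.
by rewrite /dvdn E.
Qed.

Local Notation D := (<<[set de; (rh * de)%g]>>%g).
Local Notation R := (<[rh]>%g).

Lemma rh_in_D : rh \in D.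
Proof.
have H : (rh * de * de)%g \in D by rewrite groupM // mem_gen // !inE eqxx ?orbT.
by rewrite -mulgA de2 mulg1 in H.
Qed.

Lemma de_in_D : de \in D.
Proof. by rewrite mem_gen // !inE eqxx. Qed.

Lemma de_notin_R : de \notin R.
Proof.
apply/negP => /cycleP [c E]; move/eqP: de_neq1; apply.
have := @rhoXu m c 0 false; rewrite -E deltaE /= oppr0 add0r.
move=> /(congr1 (@vidx _)); rewrite !vidx_uu => c0.
by rewrite E rhoX0.
Qed.

Lemma deV : (de^-1 = de)%g.
Proof. by apply/eqP; rewrite eq_invg_mul de2. Qed.

Lemma de_norm : de \in 'N(R)%g.
Proof.
apply/normP; rewrite -cycleJ.
have -> : (rh ^ de = rh^-1)%g.
  apply/esym/eqP; rewrite eq_invg_mul conjgE deV mulgA.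
  by apply/eqP; apply: rd2.
exact: cycleV.
Qed.

Lemma D_sub : D \subset (R * <[de]>)%g.
Proof.
rewrite -norm_joinEr; last by rewrite cycle_subG de_norm.
rewrite gen_subG; apply/subsetP => x /setU1P [->|/set1P ->].
  by rewrite mem_gen // inE cycle_id orbT.
by rewrite groupM // mem_gen // inE cycle_id ?orbT.
Qed.

Lemma card_D : #|D| = (2 * N)%N.
Proof.
apply/eqP; rewrite eqn_leq; apply/andP; split.
  apply: leq_trans (subset_leq_card D_sub) _.
  have := mul_cardG R <[de]>%G; rewrite -!orderE ord_rh ord_de => E.
  have := cardG_gt0 (R :&: <[de]>)%G.
  move: E; move: #|(R * <[de]>)%g| #|(R :&: <[de]>)%g| => a b; nia.
have RD : R \subset D by rewrite cycle_subG rh_in_D.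
rewrite -(Lagrange RD) -orderE ord_rh.
have : (1 < #|D : R|%g)%N.
  rewrite indexg_gt1; apply: contra de_notin_R => /subsetP; apply; exact: de_in_D.
move: (#|D : R|%g) => a; nia.
Qed.

Lemma be_notin_D : be \notin D.
Proof.
apply/negP => /(subsetP D_sub) /mulsgP [r d /cycleP [c ->]].
rewrite cycle2g ?ord_de // => /setU1P dde E.
have := congr1 (fun p : {perm vert N} => vb (p (uu 0 false))) E.
rewrite permM rhoXu betaE /=.
by case: dde => [->|/set1P ->]; rewrite ?perm1 ?deltaE.
Qed.

Lemma be_cent : D \subset 'C[be]%g.
Proof.
rewrite gen_subG; apply/subsetP => x /setU1P [->|/set1P ->]; apply/cent1P;
  apply/permP => [[[i j]|[i j]]]; by rewrite !permM ?rhoE ?deltaE ?betaE.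
Qed.

Lemma S3_dprod : (D \x <[be]>)%g = <<[set rh; de; be]>>%g.
Proof.
have ce : <[be]>%g \subset 'C(D)%g by rewrite centsC cent_cycle be_cent.
have ti : (D :&: <[be]> = 1)%g.
  apply/trivgP/subsetP => x /setIP [xD]; rewrite /= cycle2g ?ord_be //.
  case/setU1P => [->|/set1P xb]; first by rewrite inE.
  by move: xD; rewrite xb (negbTE be_notin_D).
rewrite dprodEY //.
apply/eqP; rewrite eqEsubset; apply/andP; split.
  rewrite join_subG /= gen_subG cycle_subG.
  apply/andP; split; last by rewrite mem_gen // !inE eqxx ?orbT.
  apply/subsetP => x /setU1P [->|/set1P ->].
    by rewrite mem_gen // !inE eqxx ?orbT.
  by rewrite groupM // mem_gen // !inE eqxx ?orbT.
rewrite gen_subG /=; apply/subsetP => x /setUP [/setU1P [->|/set1P ->]|/set1P ->].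
- by apply: (subsetP (joing_subl _ _)); exact: rh_in_D.
- by apply: (subsetP (joing_subl _ _)); exact: de_in_D.
- by apply: (subsetP (joing_subr _ _)); exact: cycle_id.
Qed.

Lemma setXTT (gT1 gT2 : finType) : setX [set: gT1] [set: gT2] = [set: (gT1 * gT2)%type].
Proof. by apply/setP => -[x y]; rewrite !inE. Qed.

Lemma iso3 : (<<[set rh; de; be]>>%g \isog [set: ('D_(2 * N) * 'Z_2)%type])%g.
Proof.
have DD : D \isog [set: 'D_(2 * N)].
  by have := involutions_gen_dihedral ord_de ord_rd de_neq_rd; rewrite card_D.
have BZ : <[be]>%g \isog [set: 'Z_2].
  rewrite isog_cyclic_card ?cycle_cyclic //; apply/andP; split.
    by apply: prime_cyclic; rewrite cardsT card_ord.
  by rewrite cardsT card_ord -orderE ord_be.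
rewrite -setXTT.
apply: (isog_dprod S3_dprod (setX_dprod [set: 'D_(2 * N)]%G [set: 'Z_2]%G)).
  by apply: (isog_trans DD); apply: isog_setX1.
by apply: (isog_trans BZ); apply: isog_set1X.
Qed.

End Iso.

Local Close Scope ring_scope.

Theorem proposition5p2 (n k : nat) :
  ~~ odd n -> ~~ odd k -> (1 <= k)%N -> (2 * k < n)%N ->
  (n != 4 * k ->
     C_DGP n k = <<[set rho n; delta n; beta n]>>%g
     /\ (C_DGP n k \isog [set: ('D_(2 * n) * 'Z_2)%type])%g) /\
  (n = 4 * k ->
     C_DGP n k = <<[set rho n; delta n; beta n; theta n k]>>%g).
Proof.
move=> ne ke k1 kn.
case: n ne kn => [|[|m]] ne kn; first by move: kn; lia.
  by [].
have me : ~~ odd m by move: ne; rewrite /= negbK.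
split.
  move=> N4; have E := C_eq3 me ke k1 kn N4; split=> //.
  by rewrite E; exact: iso3 me ke k1 kn.
by move=> N4; exact: C_eq4 me ke k1 kn N4.
Qed.
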